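(* Let $r\ge 3$, let $\mathcal{H}$ be a $\mathrm{T}_r$-free $r$-graph with $\delta_{r-1}^{+}(\mathcal{H})\ge r$, and let $e=\{u_1,\ldots,u_r\}\in\mathcal{H}$ be an edge. Then $N_{\mathcal{H}}(e\setminus\{u_i\})\cap N_{\mathcal{H}}(u_i)=\emptyset$ for every $i\in[r]$. Moreover, the sets $N_{\mathcal{H}}(e\setminus\{u_1\}),\ldots,N_{\mathcal{H}}(e\setminus\{u_r\})$ are pairwise disjoint and each of them is independent in $\mathcal{H}$.
   Context: An $r$-graph $\mathcal{H}$ is a collection of $r$-subsets (edges) of a finite vertex set $V(\mathcal{H})$. The shadow is $\partial\mathcal{H}=\{e\in\binom{V(\mathcal{H})}{r-1}\colon e\subseteq E \text{ for some } E\in\mathcal{H}\}$. For $f\in\partial\mathcal{H}$, $N_{\mathcal{H}}(f)=\{v\in V(\mathcal{H})\colon f\cup\{v\}\in\mathcal{H}\}$. For a vertex $v$, $N_{\mathcal{H}}(v)=\{u\in V(\mathcal{H})\setminus\{v\}\colon \{u,v\}\subseteq E \text{ for some } E\in\mathcal{H}\}$. The minimum positive codegree is $\delta_{r-1}^{+}(\mathcal{H})=\min\{|N_{\mathcal{H}}(f)|\colon f\in\partial\mathcal{H}\}$. A set $I\subseteq V(\mathcal{H})$ is independent in $\mathcal{H}$ if every edge of $\mathcal{H}$ contains at most one vertex of $I$. The $r$-uniform generalized triangle is $\mathrm{T}_r=\{\{1,\ldots,r-1,r\},\{1,\ldots,r-1,r+1\},\{r,r+1,\ldots,2r-1\}\}$;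 $\mathcal{H}$ is $\mathrm{T}_r$-free if it contains no subhypergraph isomorphic to $\mathrm{T}_r$. *)

(* Defs.v *)
From mathcomp Require Import all_boot.
Set Implicit Arguments. Unset Strict Implicit. Unset Printing Implicit Defensive.

Definition uniform (V : finType) (r : nat) (H : {set {set V}}) : Prop :=
  forall E, E \in H -> #|E| = r.

Definition shadow (V : finType) (r : nat) (H : {set {set V}}) : {set {set V}} :=
  [set f : {set V} | (#|f| == r.-1) && [exists E in H, f \subset E]].

Definition codeg_nbhd (V : finType) (H : {set {set V}}) (f : {set V}) : {set V} :=
  [set v | f :|: [set v] \in H].

Definition vert_nbhd (V : finType) (H : {set {set V}}) (v : V) : {set V} :=
  [set u | (u != v) && [exists E in H, [set u; v] \subset E]].

Definition min_pos_codeg_ge (V : finType) (r : nat) (H : {set {set V}}) (k : nat) : Prop :=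
  forall f, f \in shadow r H -> k <= #|codeg_nbhd H f|.

Definition independent (V : finType) (H : {set {set V}}) (I : {set V}) : Prop :=
  forall E, E \in H -> #|E :&: I| <= 1.

(* H contains a copy of T_r = {S+a, S+b, {a,b}+C'} with |S| = r-1,
   a <> b outside S, and the third edge meeting S+a+b exactly in {a,b}. *)
Definition contains_Tr (V : finType) (r : nat) (H : {set {set V}}) : Prop :=
  exists S : {set V}, exists a b : V, exists C : {set V},
    [/\ #|S| = r.-1, a \notin S, b \notin S & a != b] /\
    [/\ S :|: [set a] \in H, S :|: [set b] \in H,
        C \in H, [set a; b] \subset C & [disjoint C & S]].

Definition Tr_free (V : finType) (r : nat) (H : {set {set V}}) : Prop :=
  ~ contains_Tr r H.

(* Main.v *)
Require Import Defs.
From mathcomp Require Import all_boot.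
From mathcomp Require Import zify.

Lemma growL (V : finType) (r : nat) (H : {set {set V}}) (S : {set V}) (a b : V) :
  1 <= r -> uniform r H -> min_pos_codeg_ge r H r -> #|S| = r.-1 ->
  a \notin S -> b \notin S ->
  forall n E, E \in H -> a \in E -> b \in E -> #|E :&: S| <= n ->
  exists C, [/\ C \in H, [set a; b] \subset C & [disjoint C & S]].
Proof.
move=> r1 unif cod cS aS bS n; elim: n => [|n IH] E EH aE bE cn.
  exists E; split => //; first by rewrite subUset !sub1set aE bE.
  by rewrite -setI_eq0 -cards_eq0; lia.
case: (set_0Vmem (E :&: S)) => [E0|[x xES]].
  exists E; split => //; first by rewrite subUset !sub1set aE bE.
  by rewrite -setI_eq0 E0.
have /setIP [xE xS] := xES.
set f := E :\ x.
have cf : #|f| = r.-1.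
  have := cardsD1 x E; rewrite xE (unif E EH) /f; lia.
have fsh : f \in shadow r H.
  rewrite inE cf eqxx /=; apply/existsP; exists E; rewrite EH /=.
  exact: subD1set.
have := cod f fsh => cN.
have : ~~ (codeg_nbhd H f \subset S).
  apply/negP => /subset_leq_card; lia.
case/subsetPn => y yN yS.
have E'H : f :|: [set y] \in H by move: yN; rewrite inE.
have ax : a != x by apply/eqP => ax; rewrite ax xS in aS.
have bx : b != x by apply/eqP => bx; rewrite bx xS in bS.
apply: (IH _ E'H).
- by rewrite !inE ax aE.
- by rewrite !inE bx bE.
have sub : (f :|: [set y]) :&: S \subset (E :&: S) :\ x.
  apply/subsetP => z; rewrite !inE => /andP [/orP [/andP [zx zE]|/eqP zy] zS].
    by rewrite zx zE zS.
  by move: yS; rewrite -zy zS.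
have := subset_leq_card sub.
have := cardsD1 x (E :&: S); rewrite xES add1n => cE1 c2. rewrite -ltnS; apply: leq_trans cn; rewrite cE1 ltnS; exact: c2.
Qed.

Lemma keyK (V : finType) (r : nat) (H : {set {set V}}) (S : {set V}) (a b : V) E :
  1 <= r -> uniform r H -> Tr_free r H -> min_pos_codeg_ge r H r -> #|S| = r.-1 ->
  a \in codeg_nbhd H S -> b \in codeg_nbhd H S -> a != b ->
  E \in H -> a \in E -> b \in E -> False.
Proof.
move=> r1 unif tf cod cS; rewrite !inE => aN bN ab EH aE bE.
have nS : forall c, S :|: [set c] \in H -> c \notin S.
  move=> c /unif; move=> cU; apply/negP => cS'; move: cU.
  have -> : S :|: [set c] = S by apply/setUidPl; rewrite sub1set.
  rewrite cS; lia.
have [C [CH abC dC]] := growL _ _ _ _ _ _ r1 unif cod cS (nS _ aN) (nS _ bN) _ _ EH aE bE (leqnn _).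
apply: tf; exists S, a, b, C; split; first by split => //; apply: nS.
by split.
Qed.

Lemma notin_e (V : finType) (r : nat) (H : {set {set V}}) (e : {set V}) u v :
  uniform r H -> e \in H -> u \in e -> v \in codeg_nbhd H (e :\ u) -> v != u -> v \notin e.
Proof.
move=> unif eH ue; rewrite inE => vN vu; apply/negP => ve.
have := unif _ vN.
have -> : e :\ u :|: [set v] = e :\ u.
  by apply/setUidPl; rewrite sub1set !inE vu ve.
have := unif _ eH; rewrite (cardsD1 u e) ue; lia.
Qed.

Theorem lemma2p2 (V : finType) (r : nat) (H : {set {set V}})
  (e : {set V}) :
  3 <= r ->
  uniform r H ->
  Tr_free r H ->
  min_pos_codeg_ge r H r ->
  e \in H ->
  (forall u, u \in e ->
     codeg_nbhd H (e :\ u) :&: vert_nbhd H u = set0) /\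
  (forall u w, u \in e -> w \in e -> u != w ->
     [disjoint codeg_nbhd H (e :\ u) & codeg_nbhd H (e :\ w)]) /\
  (forall u, u \in e -> independent H (codeg_nbhd H (e :\ u))).
Proof.
move=> r3 unif tf cod eH.
have r1 : 1 <= r by lia.
have cS : forall u, u \in e -> #|e :\ u| = r.-1.
  by move=> u ue; have := unif _ eH; rewrite (cardsD1 u e) ue; lia.
have uN : forall u, u \in e -> u \in codeg_nbhd H (e :\ u).
  by move=> u ue; rewrite inE setUC setD1K.
split; [|split].
- move=> u ue; apply/setP => v; rewrite !inE.
  apply/negP => /andP [vN /andP [vu /existsP [E /andP [EH]]]].
  rewrite subUset !sub1set => /andP [vE uE].
  have vN1 : v \in codeg_nbhd H (e :\ u) by rewrite inE.
  by apply: (keyK _ _ _ _ _ _ _ r1 unif tf cod (cS _ ue) (uN _ ue) vN1 _ EH uE vE); rewrite eq_sym.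
- move=> u w ue we uw; rewrite -setI_eq0; apply/eqP/setP => v.
  rewrite inE [v \in set0]inE.
  apply/negP => /andP [vNu vNw].
  have vu : v != u.
    apply/eqP => vu; subst v.
    by move: (notin_e _ _ _ _ _ _ unif eH we vNw uw); rewrite ue.
  have vw : v != w.
    apply/eqP => vw; subst v.
    by move: (notin_e _ _ _ _ _ _ unif eH ue vNu vu); rewrite we.
  have vNw1 := vNw; rewrite inE in vNw1.
  apply: (keyK _ _ _ _ _ _ _ r1 unif tf cod (cS _ ue) (uN _ ue) vNu _ vNw1).
  + by rewrite eq_sym.
  + by rewrite !inE ue andbT uw.
  + by rewrite !inE eqxx orbT.
- move=> u ue E EH; rewrite leqNgt; apply/negP => /card_gt1P [a [b [aI bI ab]]].
  move: aI bI => /setIP [aE aN] /setIP [bE bN].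
  exact: (keyK _ _ _ _ _ _ _ r1 unif tf cod (cS _ ue) aN bN ab EH aE bE).
Qed.
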